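(* Let $K\subset\mathbb{R}$ be a real biquadratic bicyclic number field with quadratic subfields $k_1,k_2,k_3$, whose fundamental units $\varepsilon_i>1$ all satisfy $N_{k_i/\mathbb{Q}}(\varepsilon_i)=-1$. Let $\eta=\varepsilon_1\varepsilon_2\varepsilon_3$. Then $\mathbb{Q}(\eta)=K$, the extension $\mathbb{Q}(\sqrt{\eta})/\mathbb{Q}$ is Galois and its Galois group has exponent $2$. Moreover, there exists $r\in\mathbb{Q}\setminus\{0\}$ such that $K(\sqrt{\eta})=K(\sqrt r)$, and, setting $\rho=\sqrt{r\eta}$, one has $\rho\in K$ and $\eta=\rho^2/r$. *)

(* Defs.v *)
(* all numbers live in algC (algebraic closure of Q, with its
   real ordering); subfields of algC are predicates algC -> Prop. *)
From HB Require Import structures.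
From mathcomp Require Import all_boot all_order all_algebra.
From mathcomp Require Import algC algnum.
Set Implicit Arguments. Unset Strict Implicit. Unset Printing Implicit Defensive.
Import Order.TTheory GRing.Theory Num.Theory.
Local Open Scope ring_scope.

Definition rat_square (q : rat) : Prop := exists t : rat, t ^+ 2 = q.

Definition quad_field (d : rat) (x : algC) : Prop :=
  exists p q : rat, x = ratr p + ratr q * sqrtC (ratr d).

Definition biquad_field (a b : rat) (x : algC) : Prop :=
  exists p0 p1 p2 p3 : rat,
    x = ratr p0 + ratr p1 * sqrtC (ratr a) + ratr p2 * sqrtC (ratr b)
        + ratr p3 * (sqrtC (ratr a) * sqrtC (ratr b)).

Definition quad_unit (d : rat) (u : algC) : Prop :=
  quad_field d u /\ u != 0 /\ u \in Aint /\ u^-1 \in Aint.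

Definition fundamental_unit (d : rat) (eps : algC) : Prop :=
  quad_unit d eps /\ 1 < eps /\
  forall u, quad_unit d u -> exists z : int, u = eps ^ z \/ u = - eps ^ z.

Definition quad_norm_is (d : rat) (x : algC) (n : rat) : Prop :=
  exists p q : rat, x = ratr p + ratr q * sqrtC (ratr d) /\
                    p ^+ 2 - d * q ^+ 2 = n.

Definition is_subfield (F : algC -> Prop) : Prop :=
  F 1 /\ (forall x y, F x -> F y -> F (x - y)) /\
  (forall x y, F x -> F y -> F (x * y)) /\
  (forall x, F x -> x != 0 -> F x^-1).

Definition gen_field (S : algC -> Prop) (x : algC) : Prop :=
  forall F, is_subfield F -> (forall y, S y -> F y) -> F x.

Definition Qadj (a : algC) : algC -> Prop := gen_field (fun y => y = a).
Definition adjoin (F : algC -> Prop) (a : algC) : algC -> Prop :=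
  gen_field (fun y => F y \/ y = a).

Definition same_set (F G : algC -> Prop) : Prop := forall x, F x <-> G x.

Definition field_embedding (F : algC -> Prop) (s : algC -> algC) : Prop :=
  s 1 = 1 /\ forall x y, F x -> F y -> s (x + y) = s x + s y /\ s (x * y) = s x * s y.

Definition field_aut (F : algC -> Prop) (s : algC -> algC) : Prop :=
  field_embedding F s /\ (forall x, F x -> F (s x)) /\
  (forall y, F y -> exists x, F x /\ s x = y).

(* F/Q is Galois: (char 0, so separable) F is normal: every embedding of F
   into the algebraic closure algC maps F into F *)
Definition galois_over_Q (F : algC -> Prop) : Prop :=
  forall s, field_embedding F s -> forall x, F x -> F (s x).

Definition gal_exponent2 (F : algC -> Prop) : Prop :=
  (exists s, field_aut F s /\ exists x, F x /\ s x <> x) /\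
  (forall s, field_aut F s -> forall x, F x -> s (s x) = x).

(* Main.v *)
Require Import Defs.
From HB Require Import structures.
From mathcomp Require Import all_boot all_order all_algebra.
From mathcomp Require Import algC algnum.
From mathcomp Require Import ring.
From Stdlib Require Import Classical ClassicalEpsilon.
Set Implicit Arguments. Unset Strict Implicit.
Import Order.TTheory GRing.Theory Num.Theory.
Local Open Scope ring_scope.

Definition Qf (x : algC) : Prop := exists q : rat, x = ratr q.
Definition ext (F : algC -> Prop) (t : algC) (x : algC) : Prop :=
  exists p q, F p /\ F q /\ x = p + q * t.

Section SF.
Lemma sf_1 F : is_subfield F -> F 1. Proof. by case. Qed.
Lemma sf_sub F x y : is_subfield F -> F x -> F y -> F (x - y).
Proof. by case=> _ [H _]; apply: H. Qed.
Lemma sf_mul F x y : is_subfield F -> F x -> F y -> F (x * y).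
Proof. by case=> _ [_ [H _]]; apply: H. Qed.
Lemma sf_inv F x : is_subfield F -> F x -> x != 0 -> F x^-1.
Proof. by case=> _ [_ [_ H]]; apply: H. Qed.
Lemma sf_0 F : is_subfield F -> F 0.
Proof. by move=> H; rewrite -(subrr 1); apply: sf_sub => //; apply: sf_1. Qed.
Lemma sf_opp F x : is_subfield F -> F x -> F (- x).
Proof. by move=> H Hx; rewrite -sub0r; apply: sf_sub => //; apply: sf_0. Qed.
Lemma sf_add F x y : is_subfield F -> F x -> F y -> F (x + y).
Proof. by move=> H Hx Hy; rewrite -[y]opprK; apply: sf_sub => //; apply: sf_opp. Qed.
Lemma sf_exp F x n : is_subfield F -> F x -> F (x ^+ n).
Proof. move=> H Hx; elim: n => [|n IH]; first by rewrite expr0; apply: sf_1.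
by rewrite exprS; apply: sf_mul. Qed.
Lemma sf_nat F n : is_subfield F -> F (n%:R).
Proof. move=> H; elim: n => [|n IH]; first by apply: sf_0.
by rewrite mulrS; apply: sf_add => //; apply: sf_1. Qed.
Lemma sf_int F (z : int) : is_subfield F -> F (z%:~R).
Proof. move=> H; case: z => n; first by apply: sf_nat.
by rewrite NegzE mulrNz; apply: sf_opp => //; apply: sf_nat. Qed.
Lemma sf_div F x y : is_subfield F -> F x -> F y -> F (x / y).
Proof. move=> H Hx Hy; have [->|y0] := eqVneq y 0.
  by rewrite invr0 mulr0; apply: sf_0.
by apply: sf_mul => //; apply: sf_inv. Qed.
Lemma sf_rat F q : is_subfield F -> F (ratr q).
Proof. by move=> H; rewrite /ratr; apply: sf_div => //; apply: sf_int. Qed.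
End SF.

Ltac fclose HF := repeat first
  [ assumption | apply: (sf_rat _ HF) | apply: (sf_nat _ HF) | apply: (sf_1 HF) | apply: (sf_0 HF)
  | apply: (sf_div HF) | apply: (sf_add HF) | apply: (sf_sub HF) | apply: (sf_mul HF)
  | apply: (sf_opp HF) | apply: (sf_exp _ HF) ].

Lemma Qf_sub : is_subfield Qf.
Proof.
split; first by exists 1; rewrite rmorph1.
split; first by move=> x y [p ->] [q ->]; exists (p - q); rewrite rmorphB.
split; first by move=> x y [p ->] [q ->]; exists (p * q); rewrite rmorphM.
by move=> x [p ->] _; exists p^-1; rewrite fmorphV.
Qed.

Lemma sf_Qf F x : is_subfield F -> Qf x -> F x.
Proof. by move=> H [q ->]; apply: sf_rat. Qed.

Lemma ext_base F t x : is_subfield F -> F x -> ext F t x.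
Proof. move=> H Hx; exists x, 0; split=> //; split; first exact: sf_0.
by rewrite mul0r addr0. Qed.
Lemma ext_gen F t : is_subfield F -> ext F t t.
Proof. move=> H; exists 0, 1; split; first exact: sf_0.
by split; [exact: sf_1|rewrite add0r mul1r]. Qed.

Lemma ext_uniq F t p q p' q' : is_subfield F -> ~ F t ->
  F p -> F q -> F p' -> F q' -> p + q * t = p' + q' * t -> p = p' /\ q = q'.
Proof.
move=> H nt Hp Hq Hp' Hq' E.
have [eq|nq] := eqVneq q q'.
  by subst; split => //; move/addIr: E.
exfalso; apply: nt.
have -> : t = (p' - p) / (q - q').
  apply: (@mulIf _ (q - q')); first by rewrite subr_eq0.
  rewrite divfK ?subr_eq0 //.
  have : p + q * t - (p' + q' * t) = 0 by rewrite E subrr.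
  move=> E2; apply/eqP; rewrite -subr_eq0; apply/eqP; rewrite -E2; ring.
by fclose H.
Qed.

Lemma ext_subfield F t : is_subfield F -> F (t ^+ 2) -> ~ F t -> is_subfield (ext F t).
Proof.
move=> H Ht nt.
split; first exact: ext_base (sf_1 H).
split. move=> x y [p [q [Hp [Hq ->]]]] [p' [q' [Hp' [Hq' ->]]]].
  exists (p - p'), (q - q'); split; first by fclose H.
  by split; [fclose H | ring].
split. move=> x y [p [q [Hp [Hq ->]]]] [p' [q' [Hp' [Hq' ->]]]].
  exists (p * p' + q * q' * t ^+ 2), (p * q' + q * p'); split; first by fclose H.
  by split; [fclose H | ring].
move=> x [p [q [Hp [Hq ->]]]] x0.
pose n := p ^+ 2 - q ^+ 2 * t ^+ 2.
have n0 : n != 0.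
  apply/eqP => n0; have E : (p - q * t) * (p + q * t) = 0 by rewrite -[RHS]n0 /n; ring.
  move/eqP: E; rewrite mulf_eq0 (negPf x0) orbF => /eqP E.
  have [q0|qn0] := eqVneq q 0.
    by move: E x0; rewrite q0 !mul0r !subr0 addr0 => ->; rewrite eqxx.
  apply: nt; have -> : t = p / q.
    by apply: (@mulIf _ q) => //; rewrite divfK // mulrC; apply/eqP; rewrite eq_sym -subr_eq0 E.
  by fclose H.
exists (p / n), (- q / n); split; first by apply: sf_div => //; fclose H.
split; first by apply: sf_div => //; fclose H.
have E : (p + q * t) * (p / n + (- q / n) * t) = 1.
  by rewrite /n; field; rewrite exprMn.
by rewrite -[RHS](mulKf x0) E mulr1.
Qed.

Lemma gen_in S y : S y -> gen_field S y.
Proof. by move=> Sy F _ HF; apply: HF. Qed.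
Lemma gen_min S G x : is_subfield G -> (forall y, S y -> G y) -> gen_field S x -> G x.
Proof. by move=> HG HS Hx; apply: Hx. Qed.
Lemma gen_sf S : is_subfield (gen_field S).
Proof.
split; first by move=> F HF _; apply: sf_1.
split; first by move=> x y Hx Hy F HF HS; apply: sf_sub => //; [apply: Hx|apply: Hy].
split; first by move=> x y Hx Hy F HF HS; apply: sf_mul => //; [apply: Hx|apply: Hy].
by move=> x Hx x0 F HF HS; apply: sf_inv => //; apply: Hx.
Qed.

Section Emb.
Lemma emb_add F s x y : field_embedding F s -> F x -> F y -> s (x + y) = s x + s y.
Proof. by case=> _ H Hx Hy; case: (H x y Hx Hy). Qed.
Lemma emb_mul F s x y : field_embedding F s -> F x -> F y -> s (x * y) = s x * s y.
Proof. by case=> _ H Hx Hy; case: (H x y Hx Hy). Qed.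
Lemma emb_1 F s : field_embedding F s -> s 1 = 1.
Proof. by case. Qed.
Lemma emb_0 F s : is_subfield F -> field_embedding F s -> s 0 = 0.
Proof. move=> HF Hs; have := emb_add Hs (sf_0 HF) (sf_0 HF).
rewrite addr0 => E; apply: (@addrI _ (s 0)); by rewrite addr0 -E. Qed.
Lemma emb_opp F s x : is_subfield F -> field_embedding F s -> F x -> s (- x) = - s x.
Proof. move=> HF Hs Hx; have := emb_add Hs Hx (sf_opp HF Hx).
rewrite subrr (emb_0 HF Hs) => E; apply/eqP; by rewrite -addr_eq0 addrC -E. Qed.
Lemma emb_sub F s x y : is_subfield F -> field_embedding F s -> F x -> F y -> s (x - y) = s x - s y.
Proof. move=> HF Hs Hx Hy; rewrite (emb_add Hs Hx (sf_opp HF Hy)) (emb_opp HF Hs Hy). by []. Qed.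
Lemma emb_nat F s n : is_subfield F -> field_embedding F s -> s n%:R = n%:R.
Proof. move=> HF Hs; elim: n => [|n IH]; first by rewrite mulr0n (emb_0 HF Hs).
by rewrite mulrS (emb_add Hs (sf_1 HF) (sf_nat _ HF)) IH (emb_1 Hs). Qed.
Lemma emb_int F s (z : int) : is_subfield F -> field_embedding F s -> s z%:~R = z%:~R.
Proof. move=> HF Hs; case: z => n; first exact: (emb_nat n HF Hs).
by rewrite NegzE !mulrNz (emb_opp HF Hs (sf_nat _ HF)) (emb_nat _ HF Hs). Qed.
Lemma emb_inv F s x : is_subfield F -> field_embedding F s -> F x -> x != 0 -> s x^-1 = (s x)^-1.
Proof. move=> HF Hs Hx x0.
have E := emb_mul Hs Hx (sf_inv HF Hx x0).
rewrite divrr ?unitfE // (emb_1 Hs) in E.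
have sx0 : s x != 0 by apply/eqP => e; have := oner_neq0 algC; rewrite E e mul0r eqxx.
by apply: (@mulfI _ (s x)) => //; rewrite -E divrr ?unitfE. Qed.
Lemma emb_rat F s q : is_subfield F -> field_embedding F s -> s (ratr q) = ratr q.
Proof. move=> HF Hs.
have d0 : ((denq q)%:~R : algC) != 0 by rewrite intr_eq0 denq_neq0.
rewrite /ratr (emb_mul Hs (sf_int _ HF) (sf_inv HF (sf_int _ HF) d0)).
by rewrite (emb_inv HF Hs (sf_int _ HF) d0) !(emb_int _ HF Hs). Qed.
Lemma emb_Qf F s x : is_subfield F -> field_embedding F s -> Qf x -> s x = x.
Proof. by move=> HF Hs [q ->]; apply: (emb_rat q HF Hs). Qed.
Lemma emb_mono F G s : (forall x, F x -> G x) -> field_embedding G s -> field_embedding F s.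
Proof. move=> FG [H1 H2]; split => // x y Hx Hy; apply: H2; exact: FG. Qed.
End Emb.

Lemma sq_pm (x y : algC) : x ^+ 2 = y ^+ 2 -> x = y \/ x = - y.
Proof. move=> /eqP; rewrite -subr_eq0 subr_sqr mulf_eq0 subr_eq0 addr_eq0.
by case/orP => /eqP; [left|right]. Qed.

Lemma ext_sf_mono F t x : is_subfield F -> F x -> ext F t x.
Proof. exact: ext_base. Qed.

Lemma ext_stable F t s : is_subfield F -> Qf (t ^+ 2) -> ~ F t ->
  field_embedding (ext F t) s -> (forall x, F x -> F (s x)) ->
  (s t = t \/ s t = - t) /\ forall x, ext F t x -> ext F t (s x).
Proof.
move=> HF Qt nt Hs HsF.
have HG := ext_subfield HF (sf_Qf HF Qt) nt.
have st : s t = t \/ s t = - t.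
  apply: sq_pm; rewrite expr2 -(emb_mul Hs (ext_gen t HF) (ext_gen t HF)) -expr2.
  exact: emb_Qf HG Hs Qt.
split => // x [p [q [Hp [Hq ->]]]].
rewrite (emb_add Hs (ext_base t HF Hp)) ?(emb_mul Hs (ext_base t HF Hq) (ext_gen t HF)).
  case: st => ->.
    by exists (s p), (s q); split; [exact: HsF|split; [exact: HsF|]].
  by exists (s p), (- s q); split; [exact: HsF|split; [apply: sf_opp => //; exact: HsF|ring]].
by apply: (sf_mul HG); [apply: ext_base|apply: ext_gen].
Qed.

Lemma ext_invol F t s : is_subfield F -> Qf (t ^+ 2) -> ~ F t ->
  field_embedding (ext F t) s -> (forall x, F x -> F (s x)) ->
  (forall x, F x -> s (s x) = x) ->
  forall x, ext F t x -> s (s x) = x.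
Proof.
move=> HF Qt nt Hs HsF Hinv.
have HG := ext_subfield HF (sf_Qf HF Qt) nt.
have [st _] := ext_stable HF Qt nt Hs HsF.
have Gt := ext_gen t HF.
have Gb : forall y, F y -> ext F t y by move=> y Hy; apply: ext_base.
move=> x [p [q [Hp [Hq ->]]]].
have Gqt : ext F t (q * t) := sf_mul HG (Gb _ Hq) Gt.
rewrite (emb_add Hs (Gb _ Hp) Gqt) (emb_mul Hs (Gb _ Hq) Gt).
have Fsp := HsF _ Hp; have Fsq := HsF _ Hq.
case: st => st; rewrite st.
  have G2 : ext F t (s q * t) := sf_mul HG (Gb _ Fsq) Gt.
  by rewrite (emb_add Hs (Gb _ Fsp) G2) (emb_mul Hs (Gb _ Fsq) Gt) st !Hinv.
have Gmt : ext F t (- t) by apply: sf_opp.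
have G2 : ext F t (s q * - t) := sf_mul HG (Gb _ Fsq) Gmt.
rewrite (emb_add Hs (Gb _ Fsp) G2) (emb_mul Hs (Gb _ Fsq) Gmt) (emb_opp HG Hs Gt) st !Hinv //.
by rewrite opprK.
Qed.

Definition flip (F : algC -> Prop) (t x : algC) : algC :=
  let pq := epsilon (inhabits (0, 0)) (fun pq : algC * algC => F pq.1 /\ F pq.2 /\ x = pq.1 + pq.2 * t) in
  pq.1 - pq.2 * t.

Lemma flipE F t p q : is_subfield F -> ~ F t -> F p -> F q -> flip F t (p + q * t) = p - q * t.
Proof.
move=> HF nt Hp Hq; rewrite /flip.
set P := (fun pq : algC * algC => _).
have : P (epsilon (inhabits (0, 0)) P).
  by apply: epsilon_spec; exists (p, q).
case: (epsilon _ P) => p' q' [/= Hp' [Hq' E]].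
by have [-> ->] := ext_uniq HF nt Hp' Hq' Hp Hq (esym E).
Qed.

Lemma flip_aut F t : is_subfield F -> F (t ^+ 2) -> ~ F t ->
  field_aut (ext F t) (flip F t) /\ flip F t t <> t.
Proof.
move=> HF Ht nt.
have fE := flipE HF nt.
split; last first.
  have E := fE 0 1 (sf_0 HF) (sf_1 HF).
  rewrite add0r !mul1r sub0r in E; rewrite E => E2; apply: nt.
  have -> : t = (t - (- t)) / 2 by field.
  by rewrite E2 subrr mul0r; apply: sf_0.
split.
  split.
    by have E1 := fE 1 0 (sf_1 HF) (sf_0 HF); rewrite mul0r addr0 subr0 in E1.
  move=> x y [p [q [Hp [Hq ->]]]] [p' [q' [Hp' [Hq' ->]]]]; split.
    have -> : p + q * t + (p' + q' * t) = (p + p') + (q + q') * t by ring.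
    by rewrite !fE //; [ring|fclose HF..].
  have -> : (p + q * t) * (p' + q' * t) = (p * p' + q * q' * t ^+ 2) + (p * q' + q * p') * t by ring.
  by rewrite !fE //; [ring|fclose HF..].
split.
  move=> x [p [q [Hp [Hq ->]]]]; rewrite fE //.
  by exists p, (- q); split => //; split; [fclose HF|ring].
move=> y [p [q [Hp [Hq ->]]]]; exists (p + (- q) * t); split.
  by exists p, (- q); split => //; split; [fclose HF|].
by rewrite fE ?opprK //; [ring|fclose HF].
Qed.

Lemma sq_diff0 (u v : algC) : u ^+ 2 - v ^+ 2 = 0 -> u = v \/ u = - v.
Proof. by move=> /eqP; rewrite subr_eq0 => /eqP /sq_pm. Qed.

Lemma alpha_lemma (F : algC -> Prop) (A B a2 b2 c1 c2 c3 al : algC) :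
  is_subfield F -> Qf a2 -> Qf b2 -> A ^+ 2 = a2 -> B ^+ 2 = b2 ->
  ~ Qf A -> ~ ext Qf A B -> Qf c1 -> Qf c2 -> Qf c3 ->
  c1 != 0 -> c2 != 0 -> c3 != 0 ->
  F al -> al = c1 * A + c2 * B + c3 * (A * B) -> F A /\ F B.
Proof.
move=> HF Qa Qb ha hb nA nB Q1 Q2 Q3 n1 n2 n3 Fal Eal.
have Fa : F a2 by apply: sf_Qf.
have Fb : F b2 by apply: sf_Qf.
have F1 : F c1 by apply: sf_Qf.
have F2 : F c2 by apply: sf_Qf.
have F3 : F c3 by apply: sf_Qf.
pose k0 := c1 ^+ 2 * a2 + c2 ^+ 2 * b2 + c3 ^+ 2 * a2 * b2.
pose g := (al ^+ 2 - k0) / 2.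
pose d := al * g - 3%:R * a2 * b2 * c1 * c2 * c3.
have Fg : F g by rewrite /g /k0; fclose HF.
have Fd : F d by rewrite /d; fclose HF.
pose D := - ((c2 ^+ 2 - a2 * c3 ^+ 2) * (c1 ^+ 2 - b2 * c3 ^+ 2) * (a2 * c1 ^+ 2 - b2 * c2 ^+ 2)).
have f1 : c2 ^+ 2 - a2 * c3 ^+ 2 != 0.
  apply/eqP; rewrite -ha -exprMn => /sq_diff0 [] E; apply: nA.
    have -> : A = c2 / c3 by rewrite E mulfK.
    by fclose Qf_sub.
  have -> : A = - c2 / c3 by rewrite E opprK mulfK.
  by fclose Qf_sub.
have f2 : c1 ^+ 2 - b2 * c3 ^+ 2 != 0.
  apply/eqP; rewrite -hb -exprMn => /sq_diff0 [] E; apply: nB; apply: (ext_base A Qf_sub).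
    have -> : B = c1 / c3 by rewrite E mulfK.
    by fclose Qf_sub.
  have -> : B = - c1 / c3 by rewrite E opprK mulfK.
  by fclose Qf_sub.
have f3 : a2 * c1 ^+ 2 - b2 * c2 ^+ 2 != 0.
  apply/eqP; rewrite -ha -hb -!exprMn => /sq_diff0 [] E; apply: nB.
    exists 0, (c1 / c2); split; first exact: sf_0 Qf_sub.
    split; first by fclose Qf_sub.
    by apply: (mulfI n2); rewrite mulrC -E; field.
  exists 0, (- c1 / c2); split; first exact: sf_0 Qf_sub.
  split; first by fclose Qf_sub.
  apply: (mulfI n2); rewrite mulrC (_ : B * c2 = - (A * c1)); first by field.
  by rewrite E opprK.
have D0 : D != 0 by rewrite /D oppr_eq0 !mulf_neq0.
have EA : D * A = (- a2 * c1 ^+ 3 * c2 ^+ 2 + a2 ^+ 2 * c1 ^+ 3 * c3 ^+ 2) * al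
   + (- b2 * c2 ^+ 3 * c3 + a2 * b2 * c2 * c3 ^+ 3) * g
   + (c1 * c2 ^+ 2 - a2 * c1 * c3 ^+ 2) * d.
  by rewrite /d /g /k0 /D Eal -ha -hb; field.
have EB : D * B = (b2 * c1 ^+ 2 * c2 ^+ 3 - b2 ^+ 2 * c2 ^+ 3 * c3 ^+ 2) * al
   + (a2 * c1 ^+ 3 * c3 - a2 * b2 * c1 * c3 ^+ 3) * g
   + (- c1 ^+ 2 * c2 + b2 * c2 * c3 ^+ 2) * d.
  by rewrite /d /g /k0 /D Eal -ha -hb; field.
have FD : F D by rewrite /D; fclose HF.
split.
  have -> : A = (D * A) / D by field.
  by rewrite EA; move: Fg Fd; generalize g d => g' d' Fg' Fd'; fclose HF.
have -> : B = (D * B) / D by field.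
by rewrite EB; move: Fg Fd; generalize g d => g' d' Fg' Fd'; fclose HF.
Qed.

Lemma sf_same F G : same_set F G -> is_subfield F -> is_subfield G.
Proof.
move=> FG [H1 [H2 [H3 H4]]]; split; first by apply/FG.
split; first by move=> x y /FG Hx /FG Hy; apply/FG; apply: H2.
split; first by move=> x y /FG Hx /FG Hy; apply/FG; apply: H3.
by move=> x /FG Hx x0; apply/FG; apply: H4.
Qed.

Lemma emb_same F G s : same_set F G -> field_embedding F s -> field_embedding G s.
Proof. by move=> FG; apply: emb_mono => x /FG. Qed.

Lemma aut_same F G s : same_set F G -> field_aut F s -> field_aut G s.
Proof.
move=> FG [He [Hm Hs]]; split; first exact: emb_same He.
split; first by move=> x /FG /Hm /FG.
by move=> y /FG /Hs [x [/FG Hx E]]; exists x.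
Qed.

Lemma same_sym F G : same_set F G -> same_set G F.
Proof. by move=> FG x; split => /FG. Qed.

Lemma tower_step F t s : is_subfield F -> Qf (t ^+ 2) -> ~ F t ->
  field_embedding (ext F t) s -> (forall x, F x -> F (s x)) ->
  (forall x, F x -> s (s x) = x) ->
  (forall x, ext F t x -> ext F t (s x)) /\ (forall x, ext F t x -> s (s x) = x).
Proof.
move=> HF Qt nt Hs Hst Hinv; split; first by case: (ext_stable HF Qt nt Hs Hst).
exact: ext_invol.
Qed.

Lemma tower_base s : field_embedding Qf s ->
  (forall x, Qf x -> Qf (s x)) /\ (forall x, Qf x -> s (s x) = x).
Proof.
move=> Hs; split => x Qx; first by rewrite (emb_Qf Qf_sub Hs Qx).
by rewrite !(emb_Qf Qf_sub Hs Qx).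
Qed.

Lemma tower_K A B s : Qf (A ^+ 2) -> Qf (B ^+ 2) -> ~ Qf A -> ~ ext Qf A B ->
  field_embedding (ext (ext Qf A) B) s ->
  (forall x, ext (ext Qf A) B x -> ext (ext Qf A) B (s x)) /\
  (forall x, ext (ext Qf A) B x -> s (s x) = x).
Proof.
move=> QA QB nA nB Hs.
have sA := ext_subfield Qf_sub (sf_Qf Qf_sub QA) nA.
have QAB : forall x, Qf x -> ext Qf A x by move=> x; apply: ext_base Qf_sub.
have incl : forall x, ext Qf A x -> ext (ext Qf A) B x by move=> x; apply: ext_base sA.
have HsA : field_embedding (ext Qf A) s by apply: emb_mono Hs.
have HsQ : field_embedding Qf s by apply: emb_mono HsA.
have [b1 b2] := tower_base HsQ.
have [a1 a2] := tower_step Qf_sub QA nA HsA b1 b2.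
exact: tower_step sA QB nB Hs a1 a2.
Qed.

Lemma norm_nz (d x y : rat) : ~ rat_square d -> x ^+ 2 - d * y ^+ 2 = -1 -> x != 0 /\ y != 0.
Proof.
move=> nd N.
have ny : y != 0.
  apply/eqP => y0; move: N; rewrite y0 expr0n /= mulr0 subr0 => E.
  by have := sqr_ge0 x; rewrite E ler0N1.
split => //; apply/eqP => x0; apply: nd; exists y^-1.
have E : d * y ^+ 2 = 1 by move: N; rewrite x0 expr0n /= sub0r => /eqP; rewrite eqr_opp => /eqP.
rewrite exprVn; apply: (@mulIf _ (y ^+ 2)); first by rewrite expf_neq0.
by rewrite mulVf ?expf_neq0 // E.
Qed.

Lemma lift_rat (x y : rat) : (ratr x : algC) = ratr y -> x = y.
Proof. exact: (fmorph_inj _). Qed.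

Lemma biquad_ext a b x : biquad_field a b x <->
  ext (ext Qf (sqrtC (ratr a))) (sqrtC (ratr b)) x.
Proof.
split.
  move=> [p0 [p1 [p2 [p3 ->]]]].
  exists (ratr p0 + ratr p1 * sqrtC (ratr a)), (ratr p2 + ratr p3 * sqrtC (ratr a)).
  split; first by exists (ratr p0), (ratr p1); split; [exists p0|split; [exists p1|]].
  split; first by exists (ratr p2), (ratr p3); split; [exists p2|split; [exists p3|]].
  ring.
move=> [p [q [[p' [q' [[p0 ->] [[p1 ->] ->]]]] [[p'' [q'' [[p2 ->] [[p3 ->] ->]]]] ->]]]].
by exists p0, p1, p2, p3; ring.
Qed.

Unset Implicit Arguments.
Set Strict Implicit.

Theorem mainTheorem4 (a b : rat) (eps1 eps2 eps3 : algC)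
  (ha : 0 < a) (hb : 0 < b)
  (hna : ~ rat_square a) (hnb : ~ rat_square b) (hnab : ~ rat_square (a * b))
  (he1 : fundamental_unit a eps1) (he2 : fundamental_unit b eps2)
  (he3 : fundamental_unit (a * b) eps3)
  (hn1 : quad_norm_is a eps1 (-1)) (hn2 : quad_norm_is b eps2 (-1))
  (hn3 : quad_norm_is (a * b) eps3 (-1)) :
  let K := biquad_field a b in
  let eta := eps1 * eps2 * eps3 in
  same_set (Qadj eta) K /\
  galois_over_Q (Qadj (sqrtC eta)) /\ gal_exponent2 (Qadj (sqrtC eta)) /\
  exists r : rat, r != 0 /\
    same_set (adjoin K (sqrtC eta)) (adjoin K (sqrtC (ratr r))) /\
    (let rho := sqrtC (ratr r * eta) in K rho /\ eta = rho ^+ 2 / ratr r).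
Proof.
move=> K eta.
have etaE : eta = eps1 * eps2 * eps3 by [].
clearbody eta.
have g1 : 1 < eps1 by case: he1 => _ [].
have g2 : 1 < eps2 by case: he2 => _ [].
have g3 : 1 < eps3 by case: he3 => _ [].
have p1 : 0 < eps1 := lt_trans ltr01 g1.
have p2 : 0 < eps2 := lt_trans ltr01 g2.
have p3 : 0 < eps3 := lt_trans ltr01 g3.
clear he1 he2 he3.
have hAB : sqrtC (ratr (a * b) : algC) = sqrtC (ratr a) * sqrtC (ratr b).
  by rewrite rmorphM sqrtCM // nnegrE ler0q ltW.
have KK : forall x, K x <-> ext (ext Qf (sqrtC (ratr a))) (sqrtC (ratr b)) x.
  by move=> x; rewrite /K; apply: biquad_ext.
clearbody K.
move: hAB KK; set A := sqrtC (ratr a : algC); set B := sqrtC (ratr b : algC) => hAB KK.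
have hA : A ^+ 2 = ratr a by rewrite sqrtCK.
have hB : B ^+ 2 = ratr b by rewrite sqrtCK.
have QA2 : Qf (A ^+ 2) by rewrite hA; exists a.
have QB2 : Qf (B ^+ 2) by rewrite hB; exists b.
have nA : ~ Qf A.
  move=> [t Et]; apply: hna; exists t; apply: lift_rat.
  by rewrite rmorphXn -hA Et.
have sQA := ext_subfield Qf_sub (sf_Qf Qf_sub QA2) nA.
have nB : ~ ext Qf A B.
  move=> [p [q [[p' ->] [[q' ->] E]]]].
  have E2 : (ratr b : algC) = ratr p' ^+ 2 + ratr q' ^+ 2 * ratr a + 2%:R * ratr p' * ratr q' * A.
    by rewrite -hB -hA E; ring.
  have [p0|pn0] := eqVneq p' 0.
    apply: hnab; exists (q' * a); apply: lift_rat.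
    have E4 : (ratr b : algC) = ratr q' ^+ 2 * ratr a by rewrite E2 p0 rmorph0; ring.
    by rewrite rmorphXn !rmorphM /= E4; ring.
  have [q0|qn0] := eqVneq q' 0.
    apply: hnb; exists p'; apply: lift_rat.
    have E4 : (ratr b : algC) = ratr p' ^+ 2 by rewrite E2 q0 rmorph0; ring.
    by rewrite rmorphXn /= E4.
  apply: nA.
  have nz : (2%:R * ratr p' * ratr q' : algC) != 0.
    have t0 : (2%:R : algC) != 0 by rewrite pnatr_eq0.
    have r1 : (ratr p' : algC) != 0 by rewrite fmorph_eq0.
    have r2 : (ratr q' : algC) != 0 by rewrite fmorph_eq0.
    exact: mulf_neq0 (mulf_neq0 t0 r1) r2.
  have -> : A = (ratr b - ratr p' ^+ 2 - ratr q' ^+ 2 * ratr a) / (2%:R * ratr p' * ratr q').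
    by apply: (@mulIf _ (2%:R * ratr p' * ratr q')) => //; rewrite divfK // E2; ring.
  by fclose Qf_sub.
have sKx := ext_subfield sQA (ext_base A Qf_sub QB2) nB.
set Kx := ext (ext Qf A) B in KK sKx.
have sK : is_subfield K := sf_same (fun x => iff_sym (KK x)) sKx.
have KxA : Kx A := ext_base B sQA (ext_gen A Qf_sub).
have KxB : Kx B := ext_gen B sQA.
case: hn1 => x1 [y1 [E1 N1]].
case: hn2 => x2 [y2 [E2 N2]].
case: hn3 => x3 [y3 [E3 N3]].
rewrite hAB in E3; rewrite -/A in E1; rewrite -/B in E2.
have [nx1 ny1] := norm_nz hna N1.
have [nx2 ny2] := norm_nz hnb N2.
have [nx3 ny3] := norm_nz hnab N3.
have rx1 : (ratr x1 : algC) != 0 by rewrite fmorph_eq0.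
have rx2 : (ratr x2 : algC) != 0 by rewrite fmorph_eq0.
have rx3 : (ratr x3 : algC) != 0 by rewrite fmorph_eq0.
have ry1 : (ratr y1 : algC) != 0 by rewrite fmorph_eq0.
have ry2 : (ratr y2 : algC) != 0 by rewrite fmorph_eq0.
have ry3 : (ratr y3 : algC) != 0 by rewrite fmorph_eq0.
have N1' : (ratr x1 : algC) ^+ 2 - A ^+ 2 * ratr y1 ^+ 2 = -1.
  by rewrite hA -!rmorphXn -rmorphM -rmorphB N1 rmorphN rmorph1.
have N2' : (ratr x2 : algC) ^+ 2 - B ^+ 2 * ratr y2 ^+ 2 = -1.
  by rewrite hB -!rmorphXn -rmorphM -rmorphB N2 rmorphN rmorph1.
have N3' : (ratr x3 : algC) ^+ 2 - (A ^+ 2 * B ^+ 2) * ratr y3 ^+ 2 = -1.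
  by rewrite hA hB -!rmorphXn -!rmorphM -rmorphB N3 rmorphN rmorph1.
have eta0 : eta != 0 by rewrite etaE !mulf_neq0 // gt_eqF.
have Einv : eta^-1 = - ((ratr x1 - ratr y1 * A) * (ratr x2 - ratr y2 * B) * (ratr x3 - ratr y3 * (A * B))).
  have P : eta * (- ((ratr x1 - ratr y1 * A) * (ratr x2 - ratr y2 * B) * (ratr x3 - ratr y3 * (A * B)))) = 1.
    rewrite etaE E1 E2 E3.
    transitivity (- (((ratr x1 : algC) ^+ 2 - A ^+ 2 * ratr y1 ^+ 2) * ((ratr x2 : algC) ^+ 2 - B ^+ 2 * ratr y2 ^+ 2) * ((ratr x3 : algC) ^+ 2 - (A ^+ 2 * B ^+ 2) * ratr y3 ^+ 2))); first ring.
    by rewrite N1' N2' N3'; ring.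
  by rewrite -[RHS](mulKf eta0) P mulr1.
have sE := gen_sf (fun y => y = eta).
have FQ : same_set (Qadj eta) K.
  move=> x; split.
    move=> Hx; apply/KK; apply: (gen_min sKx _ Hx) => y ->.
    by rewrite etaE E1 E2 E3; fclose sKx.
  move=> /KK [p [q [[pp1 [qq1 [[r0 ->] [[r1 ->] ->]]]] [[pp2 [qq2 [[r2 ->] [[r3 ->] ->]]]] ->]]]].
  have Feta : Qadj eta eta by apply: gen_in.
  have Finv : Qadj eta eta^-1 by apply: sf_inv.
  have [FA FB] : Qadj eta A /\ Qadj eta B.
    apply: (@alpha_lemma (Qadj eta) A B (ratr a) (ratr b)
      (ratr y1 * ratr x2 * ratr x3) (ratr x1 * ratr y2 * ratr x3) (ratr x1 * ratr x2 * ratr y3)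
      ((eta + eta^-1) / 2%:R - ratr y1 * ratr y2 * ratr y3 * (ratr a * ratr b))) => //.
    - by exists a.
    - by exists b.
    - by fclose Qf_sub.
    - by fclose Qf_sub.
    - by fclose Qf_sub.
    - exact: mulf_neq0 (mulf_neq0 ry1 rx2) rx3.
    - exact: mulf_neq0 (mulf_neq0 rx1 ry2) rx3.
    - exact: mulf_neq0 (mulf_neq0 rx1 rx2) ry3.
    - by fclose sE.
    - by rewrite Einv etaE E1 E2 E3 -hA -hB; field.
  by fclose sE.
pose rho0 := 1 - eps1 * eps2 - eps1 * eps3 - eps2 * eps3.
pose R := (4%:R * (ratr x1 + ratr x2 + ratr x3 - ratr x1 * ratr x2 * ratr x3
               + ratr a * ratr b * (ratr y1 * ratr y2 * ratr y3)) : algC).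
have Erho : rho0 ^+ 2 = R * eta.
  rewrite /rho0 /R etaE E1 E2 E3.
  apply/eqP; rewrite -subr_eq0; apply/eqP.
  transitivity (((ratr x1 : algC) ^+ 2 - A ^+ 2 * ratr y1 ^+ 2 + 1) * ((ratr x3)^+2 - 2%:R*(ratr x2)*(ratr x3) + (ratr x2)^+2 + 4%:R*(ratr x2)^+2*(ratr x3)^+2 - 2%:R*B*(ratr x3)*(ratr y2) + 2%:R*B*(ratr x2)*(ratr y2) + 4%:R*B*(ratr x2)*(ratr x3)^+2*(ratr y2) + B^+2*(ratr y2)^+2 + 2%:R*A*B*(ratr x3)*(ratr y3) - 2%:R*A*B*(ratr x2)*(ratr y3) + 4%:R*A*B*(ratr x2)^+2*(ratr x3)*(ratr y3) - 2%:R*A*B^+2*(ratr y2)*(ratr y3) + 4%:R*A*B^+2*(ratr x2)*(ratr x3)*(ratr y2)*(ratr y3) + A^+2*B^+2*(ratr y3)^+2)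
     + ((ratr x2 : algC) ^+ 2 - B ^+ 2 * ratr y2 ^+ 2 + 1) * (-1%:R - 3%:R*(ratr x3)^+2 - 2%:R*(ratr x1)*(ratr x3) - 2%:R*A*(ratr x3)*(ratr y1) + 2%:R*A*(ratr x1)*(ratr y1) + 4%:R*A*(ratr x1)*(ratr x3)^+2*(ratr y1) - 2%:R*A*B*(ratr x3)*(ratr y3) - 2%:R*A*B*(ratr x1)*(ratr y3) + 2%:R*A^+2*(ratr y1)^+2 + 4%:R*A^+2*(ratr x3)^+2*(ratr y1)^+2 - 2%:R*A^+2*B*(ratr y1)*(ratr y3) + 4%:R*A^+2*B*(ratr x1)*(ratr x3)*(ratr y1)*(ratr y3) + A^+2*B^+2*(ratr y3)^+2 + 4%:R*A^+3*B*(ratr x3)*(ratr y1)^+2*(ratr y3))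
     + ((ratr x3 : algC) ^+ 2 - (A ^+ 2 * B ^+ 2) * ratr y3 ^+ 2 + 1) * (2%:R - 2%:R*(ratr x1)*(ratr x2) - 2%:R*B*(ratr x2)*(ratr y2) - 2%:R*B*(ratr x1)*(ratr y2) - 2%:R*B^+2*(ratr y2)^+2 - 2%:R*A*(ratr x2)*(ratr y1) - 2%:R*A*(ratr x1)*(ratr y1) - 2%:R*A*B*(ratr y1)*(ratr y2) + 4%:R*A*B*(ratr x1)*(ratr x2)*(ratr y1)*(ratr y2) + 4%:R*A*B^+2*(ratr x1)*(ratr y1)*(ratr y2)^+2 - 2%:R*A^+2*(ratr y1)^+2 + 4%:R*A^+2*B*(ratr x2)*(ratr y1)^+2*(ratr y2) + 4%:R*A^+2*B^+2*(ratr y1)^+2*(ratr y2)^+2)).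
    rewrite -hA -hB; ring.
  by rewrite N1' N2' N3' !addNr !mul0r !addr0.
have rho0n : rho0 != 0.
  have S1 : 1 < eps1 * eps2 + (eps1 * eps3 + eps2 * eps3).
    apply: (lt_le_trans (mulr_egt1 g1 g2)); rewrite lerDl.
    by apply: addr_ge0; apply: ltW; apply: mulr_gt0.
  have -> : rho0 = 1 - (eps1 * eps2 + (eps1 * eps3 + eps2 * eps3)) by rewrite /rho0; ring.
  by rewrite subr_eq0 lt_eqF.
have R0 : R != 0.
  apply/eqP => R0; move: Erho; rewrite R0 mul0r => /eqP.
  by rewrite expf_eq0 (negPf rho0n) andbF.
have [r0 Er0] : Qf R by rewrite /R; fclose Qf_sub.
have Krho0 : Kx rho0 by rewrite /rho0 E1 E2 E3; fclose sKx.
have r00 : (ratr r0 : algC) != 0 by rewrite -Er0.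
set w := sqrtC eta.
set C := sqrtC (ratr r0 : algC).
have hw : w ^+ 2 = eta by rewrite sqrtCK.
have hC : C ^+ 2 = ratr r0 by rewrite sqrtCK.
have wC : w * C = rho0 \/ w * C = - rho0.
  by apply: sq_pm; rewrite exprMn hw hC -Er0 Erho mulrC.
have KwC : Kx (w * C) by case: wC => ->; [|apply: sf_opp].
have w0 : w != 0 by apply/eqP => w0; move: hw; rewrite w0 expr0n /= => /esym/eqP; rewrite (negPf eta0).
have C0 : C != 0 by apply/eqP => C0; move: hC; rewrite C0 expr0n /= => /esym/eqP; rewrite (negPf r00).
have wE : w = (w * C) / C by field.
have CE : C = (w * C) / w by field.
have QC2 : Qf (C ^+ 2) by rewrite hC; exists r0.
have sEw := gen_sf (fun y => y = w).
have Ew : Qadj w w by apply: gen_in.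
have Eeta : Qadj w eta by rewrite -hw; fclose sEw.
have KE : forall x, Kx x -> Qadj w x.
  move=> x /KK /FQ Hx; apply: (gen_min sEw _ Hx) => y ->; exact: Eeta.
have EC : Qadj w C by rewrite CE; apply: (sf_div sEw) => //; apply: KE.
split; first exact: FQ.
have [GAL EXP] : galois_over_Q (Qadj w) /\ gal_exponent2 (Qadj w).
  case: (classic (Kx C)) => [KC | nKC].
    have same : same_set (Qadj w) Kx.
      move=> x; split; last exact: KE.
      move=> Hx; apply: (gen_min sKx _ Hx) => y ->.
      by rewrite wE; apply: sf_div.
    split.
      move=> s Hs x Hx; have Hs' := emb_same same Hs.
      have [st _] := tower_K QA2 QB2 nA nB Hs'.
      by apply/same; apply: st; apply/same.
    split.
      have [Haut nt] := flip_aut sQA (ext_base A Qf_sub QB2) nB.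
      exists (flip (ext Qf A) B); split; first exact: aut_same (same_sym same) Haut.
      by exists B; split => //; apply/same.
    move=> s [Hs _] x Hx.
    have [_ inv] := tower_K QA2 QB2 nA nB (emb_same same Hs).
    by apply: inv; apply/same.
  have KC2 : Kx (C ^+ 2) by apply: sf_Qf.
  have sG := ext_subfield sKx KC2 nKC.
  have same : same_set (Qadj w) (ext Kx C).
    move=> x; split.
      move=> Hx; apply: (gen_min sG _ Hx) => y ->.
      rewrite wE; apply: (sf_div sG); first exact: ext_base.
      exact: ext_gen.
    move=> [p [q [Hp [Hq ->]]]].
    have := KE _ Hp; have := KE _ Hq => Eq Ep.
    by fclose sEw.
  have KG : forall x, Kx x -> ext Kx C x by move=> x; apply: ext_base.
  split.
    move=> s Hs x Hx; have Hs' := emb_same same Hs.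
    have [st inv] := tower_K QA2 QB2 nA nB (emb_mono KG Hs').
    have [st' _] := tower_step sKx QC2 nKC Hs' st inv.
    by apply/same; apply: st'; apply/same.
  split.
    have [Haut nt] := flip_aut sKx KC2 nKC.
    exists (flip Kx C); split; first exact: aut_same (same_sym same) Haut.
    by exists C; split => //; apply/same; apply: ext_gen.
  move=> s [Hs _] x Hx.
  have Hs' := emb_same same Hs.
  have [st inv] := tower_K QA2 QB2 nA nB (emb_mono KG Hs').
  have [_ inv'] := tower_step sKx QC2 nKC Hs' st inv.
  by apply: inv'; apply/same.
split; first exact: GAL.
split; first exact: EXP.
exists r0; split; first by move: r00; rewrite fmorph_eq0.
split.
  have sA1 := gen_sf (fun y => K y \/ y = w).
  have sA2 := gen_sf (fun y => K y \/ y = C).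
  move=> x; split.
    move=> Hx; apply: (gen_min sA2 _ Hx) => y [Ky | Ey].
      by apply: gen_in; left.
    have -> : y = w by rewrite Ey.
    rewrite wE; apply: (sf_div sA2); apply: gen_in; [left; apply/KK | right] => //.
  move=> Hx; apply: (gen_min sA1 _ Hx) => y [Ky | Ey].
    by apply: gen_in; left.
  have -> : y = C by rewrite Ey.
  rewrite CE; apply: (sf_div sA1); apply: gen_in; [left; apply/KK | right] => //.
move=> rho.
have hrho : rho ^+ 2 = rho0 ^+ 2 by rewrite /rho sqrtCK -Er0 Erho.
split.
  apply/KK; case: (sq_pm hrho) => ->; [exact: Krho0 | exact: sf_opp].
by rewrite hrho Erho Er0; field.
Qed.
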